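(* If $m$ is even, then $\mathrm{U}_m-\mathrm{U}_m^\top$ is invertible with inverse $(\mathrm{U}_m-\mathrm{U}_m^\top)^{-1}=\mathrm{Q}_m(\mathrm{U}_m-\mathrm{U}_m^\top)\mathrm{Q}_m$.
   Context: $\mathrm{U}_m\in\mathbb{R}^{m\times m}$ is the strictly upper triangular matrix with all entries above the diagonal equal to $1$, and $\mathrm{Q}_m$ is the $m\times m$ diagonal matrix with diagonal entries $(-1)^{i+1}$, $i=1,\dots,m$. *)

(* Defs.v *)
From mathcomp Require Import all_boot all_order all_algebra.
Set Implicit Arguments. Unset Strict Implicit. Unset Printing Implicit Defensive.
Import GRing.Theory Num.Theory.
Local Open Scope ring_scope.

Definition Umat (R : nzRingType) (m : nat) : 'M[R]_m :=
  \matrix_(i < m, j < m) (if (i < j)%N then 1 else 0).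

(* Q_m : diagonal with entries (-1)^(i+1) for 1-based i = 1..m,
   i.e. (-1)^i for 0-based index i: +1, -1, +1, ... *)
Definition Qmat (R : nzRingType) (m : nat) : 'M[R]_m :=
  \matrix_(i < m, j < m) (if i == j then (-1) ^+ (nat_of_ord i) else 0).

(* Main.v *)
Require Import Defs.
From mathcomp Require Import all_boot all_order all_algebra.
From mathcomp Require Import zify ring.
Import GRing.Theory.
Local Open Scope ring_scope.

Section Aux.
Variable R : realFieldType.

Definition sg (a b : nat) : R := (if (a < b)%N then 1 else 0) - (if (b < a)%N then 1 else 0).
Definition alt (a b : nat) : R := \sum_(a <= j < b) (-1) ^+ j.

Lemma altE a d : alt a (a + d) = if odd d then (-1) ^+ a else 0.
Proof.
elim: d => [|d IH]; first by rewrite addn0 /alt big_geq.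
rewrite /alt addnS big_nat_recr /=; last by rewrite leq_addr.
rewrite -/(alt a (a + d)) IH exprD -(signr_odd _ d).
by case: (odd d); rewrite /= ?expr1 ?expr0; ring.
Qed.

Lemma altE' a b : (a <= b)%N -> alt a b = if odd (b - a) then (-1) ^+ a else 0.
Proof. by move=> h; rewrite -altE subnKC. Qed.

Lemma key m i k : ~~ odd m -> (i < m)%N -> (k < m)%N -> (i <= k)%N ->
  \sum_(0 <= j < m) sg i j * ((-1) ^+ j * sg j k * (-1) ^+ k) = (i == k)%:R.
Proof.
move=> hm him hkm hik.
case: (ltngtP i k) hik => // [hlt|heq] _.
- set F := fun j => sg i j * ((-1) ^+ j * sg j k * (-1) ^+ k).
  rewrite (@big_cat_nat _ _ _ i 0 m) ?(ltnW him) //=.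
  rewrite (@big_cat_nat _ _ _ i.+1 i m) ?him //= big_nat1.
  rewrite (@big_cat_nat _ _ _ k i.+1 m) ?(ltnW hkm) //=.
  rewrite (@big_cat_nat _ _ _ k.+1 k m) ?hkm //= big_nat1.
  rewrite /F.
  have E1 : \sum_(0 <= j < i) sg i j * ((-1) ^+ j * sg j k * (-1) ^+ k)
          = - (-1) ^+ k * alt 0 i.
    rewrite /alt mulr_sumr; apply: eq_big_nat => j /andP[_ hj].
    rewrite /sg; case: ltnP => ?; try lia; case: ltnP => ?; try lia.
    case: ltnP => ?; try lia; case: ltnP => ?; try lia. ring.
  have E2 : \sum_(i.+1 <= j < k) sg i j * ((-1) ^+ j * sg j k * (-1) ^+ k)
          = (-1) ^+ k * alt i.+1 k.
    rewrite /alt mulr_sumr; apply: eq_big_nat => j /andP[hj1 hj].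
    rewrite /sg; case: ltnP => ?; try lia; case: ltnP => ?; try lia.
    case: ltnP => ?; try lia; case: ltnP => ?; try lia. ring.
  have E3 : \sum_(k.+1 <= j < m) sg i j * ((-1) ^+ j * sg j k * (-1) ^+ k)
          = - (-1) ^+ k * alt k.+1 m.
    rewrite /alt mulr_sumr; apply: eq_big_nat => j /andP[hj1 hj].
    rewrite /sg; case: ltnP => ?; try lia; case: ltnP => ?; try lia.
    case: ltnP => ?; try lia; case: ltnP => ?; try lia. ring.
  rewrite E1 E2 E3 /sg ltnn.
  rewrite (@altE' _ _ (leq0n i)) (@altE' _ _ hlt) (@altE' _ _ hkm) !oddB ?subn0 //.
  rewrite hlt ltnn (_ : (k < i)%N = false); last by apply/negbTE; rewrite -leqNgt ltnW.
  rewrite /= !exprS -(signr_odd _ i) -(signr_odd _ k).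
  move: hm; case: (odd m) => // _.
  by case: (odd i); case: (odd k); simpl; ring.
- subst k.
  set F := fun j => sg i j * ((-1) ^+ j * sg j i * (-1) ^+ i).
  rewrite (@big_cat_nat _ _ _ i 0 m) ?(ltnW him) //=.
  rewrite (@big_cat_nat _ _ _ i.+1 i m) ?him //= big_nat1.
  rewrite /F.
  have E1 : \sum_(0 <= j < i) sg i j * ((-1) ^+ j * sg j i * (-1) ^+ i)
          = - (-1) ^+ i * alt 0 i.
    rewrite /alt mulr_sumr; apply: eq_big_nat => j /andP[_ hj].
    rewrite /sg; case: ltnP => ?; try lia; case: ltnP => ?; try lia. ring.
  have E3 : \sum_(i.+1 <= j < m) sg i j * ((-1) ^+ j * sg j i * (-1) ^+ i)
          = - (-1) ^+ i * alt i.+1 m.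
    rewrite /alt mulr_sumr; apply: eq_big_nat => j /andP[hj1 hj].
    rewrite /sg; case: ltnP => ?; try lia; case: ltnP => ?; try lia. ring.
  rewrite E1 E3 /sg ltnn.
  rewrite (@altE' _ _ (leq0n i)) (@altE' _ _ him) !oddB ?subn0 //.
  rewrite !exprS -(signr_odd _ i).
  move: hm; case: (odd m) => // _.
  rewrite /=; case: (odd i); simpl; ring.
Qed.

End Aux.

Theorem corollary7p5 (R : realFieldType) (m : nat) :
  ~~ odd m ->
  (Umat R m - (Umat R m)^T) \in unitmx /\
  invmx (Umat R m - (Umat R m)^T) =
    Qmat R m *m (Umat R m - (Umat R m)^T) *m Qmat R m.
Proof.
move=> hm.
set A := Umat R m - (Umat R m)^T.
have hA : forall i j : 'I_m, A i j = sg R i j.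
  by move=> i j; rewrite /A /Umat !mxE.
have hQ : Qmat R m = diag_mx (\row_(i < m) (-1) ^+ (nat_of_ord i)).
  apply/matrixP => i j; rewrite !mxE.
  by case: eqP => [->|]; rewrite ?mulr1n ?mulr0n.
have hAB : A *m (Qmat R m *m A *m Qmat R m) = 1%:M.
  apply/matrixP => i k.
  rewrite hQ mul_diag_mx mul_mx_diag !mxE.
  under eq_bigr => j _ do rewrite !mxE.
  rewrite (eq_bigr (fun j : 'I_m => sg R i j * ((-1) ^+ j * sg R j k * (-1) ^+ k))) //.
  rewrite -(big_mkord xpredT (fun j => sg R i j * ((-1) ^+ j * sg R j k * (-1) ^+ k))) /=.
  case: (leqP i k) => hik.
    by rewrite key ?ltn_ord.
  rewrite (eq_big_nat _ _ (F2 := fun j => (-1) ^+ (i + k) *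
       (sg R k j * ((-1) ^+ j * sg R j i * (-1) ^+ i)))); last first.
    move=> j _; rewrite exprD.
    have s2 : (-1) ^+ i * (-1) ^+ i = (1 : R) by rewrite -exprD -signr_odd addnn odd_double.
    have key2 : forall a b c1 c2 c3 c4 e : R, a * a = 1 -> c1 * c2 = c3 * c4 ->
        c1 * (e * c2 * b) = a * b * (c3 * (e * c4 * a)).
      move=> a b c1 c2 c3 c4 e h1 h2.
      transitivity (c1 * c2 * e * b * (a * a)); first by rewrite h1; ring.
      by rewrite h2; ring.
    by apply: key2 => //; rewrite /sg; ring.
  rewrite -mulr_sumr key ?ltn_ord ?(ltnW hik) //.
  rewrite (ltn_eqF hik) mulr0; case: eqP => // e; by rewrite e ltnn in hik.
have [uA _] := mulmx1_unit hAB.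
split => //.
by rewrite -[LHS]mulmx1 -hAB (mulmxA (invmx A) A) mulVmx // mul1mx.
Qed.
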